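(* Let $p,q>0$ with $p\neq 1$, $q\neq 1$ and $\frac{\ln p}{\ln q}$ irrational. Let $f$ be a locally integrable function on $\mathbb{R}\setminus\{0\}$ such that $\int_x^{px} f(t)\,dt$ and $\int_x^{qx} f(t)\,dt$ are constant (independent of $x\in\mathbb{R}\setminus\{0\}$). Then there is a constant $c$ such that $f(t)=\frac{c}{t}$ for almost every $t\in\mathbb{R}\setminus\{0\}$. *)

(* Defs.v *)
From HB Require Import structures.
From mathcomp Require Import all_boot all_order all_algebra.
From mathcomp Require Import all_classical all_reals all_analysis.
Set Implicit Arguments. Unset Strict Implicit. Unset Printing Implicit Defensive.
Import Order.TTheory GRing.Theory Num.Theory.
Import numFieldNormedType.Exports.
Local Open Scope classical_set_scope.
Local Open Scope ring_scope.

Definition loc_integrable_punctured (R : realType) (f : R -> R) : Prop :=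
  forall K : set R, compact K -> K `<=` ~` [set 0] ->
    (@lebesgue_measure R).-integrable K (EFin \o f).

Definition oint (R : realType) (f : R -> R) (a b : R) : R :=
  if a <= b then Rintegral (@lebesgue_measure R) `[a, b] f
  else - Rintegral (@lebesgue_measure R) `[b, a] f.

(* Main.v *)
Require Import Defs.
From HB Require Import structures.
From mathcomp Require Import all_boot all_order all_algebra.
From mathcomp Require Import all_classical all_reals all_analysis.
From mathcomp Require Import ring lra.
Import Order.TTheory GRing.Theory Num.Theory.
Import numFieldNormedType.Exports.
Local Open Scope classical_set_scope.
Local Open Scope ring_scope.
Lemma periodic_const {R : realType} (h : R -> R) (a b : R) :
  continuous h -> b != 0 -> ~ (exists r : rat, a / b = ratr r) ->
  (forall s, h (s + a) = h s) -> (forall s, h (s + b) = h s) ->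
  forall s u, h s = h u.
Proof.
move=> hc b0 irr ha hb.
pose P t := forall s, h (s + t) = h s.
have PD t1 t2 : P t1 -> P t2 -> P (t1 + t2).
  by move=> H1 H2 s; rewrite addrA H2 H1.
have PN t : P t -> P (- t).
  by move=> H s; have := H (s - t); rewrite subrK => ->.
have Pz t (k : int) : P t -> P (k%:~R * t).
  move=> Pt.
  have Pn n : P (n%:R * t).
    elim: n => [|n IH]; first by move=> s; rewrite mul0r addr0.
    by rewrite -addn1 natrD mulrDl mul1r; exact: PD.
  case: k => n; first exact: Pn.
  rewrite NegzE mulrNz mulNr; apply: PN; exact: Pn.
pose S := [set t | P t /\ 0 < t].
have Sb : S `|b|.
  split; last by rewrite normr_gt0.
  by case: (ler0P b) => _; [apply: PN|]; exact: hb.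
have hiS : has_inf S by split; [exists `|b| | exists 0 => t [_ /ltW]].
set c := inf S.
have cle t : S t -> c <= t by move=> St; exact: (ge_inf hiS.2 St).
have [cpos|cle0] := ltrP 0 c.
- have [t1 St1 t1lt] := inf_adherent cpos hiS.
  have Pc : P c.
    have [<-|t1c] := eqVneq t1 c; first by case: St1.
    have ct1 : c < t1 by rewrite lt_neqAle eq_sym t1c cle.
    have t1c0 : 0 < t1 - c by rewrite subr_gt0.
    have [t2 St2 t2lt] := inf_adherent t1c0 hiS.
    have ct2 := cle _ St2.
    have : S (t1 - t2).
      split; first by apply: PD; [case: St1|apply: PN; case: St2].
      rewrite subr_gt0; move: t2lt; rewrite subrKC //.
    move/cle; rewrite -/c => H; exfalso; move: H t1lt ct2; lra.
  have mult t : P t -> exists k : int, t = k%:~R * c.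
    move=> Pt; exists (Num.floor (t / c)).
    set k := Num.floor (t / c).
    have Pr : P (t - k%:~R * c) by apply: PD => //; apply: PN; exact: Pz.
    have /andP[l1 l2] := floor_itv (t / c); rewrite -/k in l1 l2.
    rewrite intrD in l2.
    have l1' : k%:~R * c <= t by rewrite -ler_pdivlMr.
    have l2' : t < (k%:~R + 1) * c by rewrite -ltr_pdivrMr.
    have [rp|] := ltrP 0 (t - k%:~R * c).
      have := cle _ (conj Pr rp); move: l2'; lra.
    move: l1'; lra.
  have [m am] := mult a ha; have [n bn] := mult b hb.
  exfalso; apply: irr; exists (m%:~R / n%:~R).
  have n0 : (n%:~R : R) != 0.
    by apply: contraNneq b0; rewrite bn => ->; rewrite mul0r.
  rewrite fmorph_div !rmorph_int. rewrite am bn -mulf_div divff ?mulr1 //.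
  by rewrite gt_eqF.
- move=> s u; apply/eqP/negPn/negP => neq.
  have eta : 0 < `|h u - h s| by rewrite normr_gt0 subr_eq0 eq_sym.
  have /cvgrPdist_lt /(_ _ eta) /nbhs_ballP [d /= d0 Hd] := hc u.
  have [t [Pt t0] tlt] := inf_adherent d0 hiS.
  have td : t < d by move: tlt cle0; lra.
  pose k := Num.floor ((u - s) / t).
  have /andP[l1 l2] := floor_itv ((u - s) / t); rewrite -/k intrD in l1 l2.
  have l1' : k%:~R * t <= u - s by rewrite -ler_pdivlMr.
  have l2' : u - s < (k%:~R + 1) * t by rewrite -ltr_pdivrMr.
  have hv : h (s + k%:~R * t) = h s by apply: Pz.
  have : ball u d (s + k%:~R * t).
    rewrite /ball /= ger0_norm; move: l1' l2' td; lra.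
  by move/Hd; rewrite /= hv ltxx.
Qed.
Lemma period_int {R : realType} (h : R -> R) t :
  (forall s, h (s + t) = h s) -> forall (k : int) s, h (s + k%:~R * t) = h s.
Proof.
move=> Pt.
have PD t1 t2 : (forall s, h (s + t1) = h s) -> (forall s, h (s + t2) = h s) ->
    forall s, h (s + (t1 + t2)) = h s.
  by move=> H1 H2 s; rewrite addrA H2 H1.
have Pn n : forall s, h (s + n%:R * t) = h s.
  elim: n => [|n IH]; first by move=> s; rewrite mul0r addr0.
  by rewrite -addn1 natrD mulrDl mul1r; exact: PD.
case => n s; first exact: Pn.
rewrite NegzE mulrNz mulNr.
by have := Pn n.+1 (s - n.+1%:R * t); rewrite subrK => ->.
Qed.

Lemma shift_zero {R : realType} (h : R -> R) (a b d : R) : continuous h -> a != 0 ->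
  (forall s, h (s + a) = h s) -> (forall s, h (s + b) = h s + d) -> d = 0.
Proof.
move=> hc a0 ha hb.
have ha' : forall s, h (s + `|a|) = h s.
  case: (ler0P a) => _ s //.
  by have := ha (s - a); rewrite subrK => ->.
have ap : 0 < `|a| by rewrite normr_gt0.
have cw : {within `[0, `|a|], continuous h} by exact: continuous_subspaceT.
have [cM _ HM] := EVT_max (ltW ap) cw.
have [cm _ Hm] := EVT_min (ltW ap) cw.
have bnd s : h cm <= h s <= h cM.
  pose k := Num.floor (s / `|a|).
  have /andP[l1 l2] := floor_itv (s / `|a|); rewrite -/k intrD in l1 l2.
  have l1' : k%:~R * `|a| <= s by rewrite -ler_pdivlMr.
  have l2' : s < (k%:~R + 1) * `|a| by rewrite -ltr_pdivrMr.
  have e : h s = h (s - k%:~R * `|a|).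
    by rewrite -(@period_int _ h _ ha' k (s - k%:~R * `|a|)) subrK.
  have hin : s - k%:~R * `|a| \in `[0, `|a|].
    rewrite in_itv /=; apply/andP; split; move: l1' l2'; lra.
  by rewrite e (Hm _ hin) (HM _ hin).
have hn n : h (n%:R * b) = h 0 + n%:R * d.
  elim: n => [|n IH]; first by rewrite !mul0r addr0.
  by rewrite -addn1 !natrD !mulrDl !mul1r hb IH addrA.
apply/eqP/negPn/negP => d0.
have dp : 0 < `|d| by rewrite normr_gt0.
have x0 : 0 <= (h cM - h cm) / `|d|.
  by apply: divr_ge0 => //; have /andP[? ?] := bnd 0; lra.
have := archi_boundP x0; set n := Num.bound _ => /=.
rewrite ltr_pdivrMr // => key.
have /andP[b1 b2] := bnd (n%:R * b); rewrite hn in b1 b2.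
have /andP[c1 c2] := bnd 0.
have nge : 0 <= (n%:R : R) by [].
case: (ler0P d) key => _ key.
- rewrite mulrN in key; move: key b1 b2 c1 c2; lra.
- move: key b1 b2 c1 c2; lra.
Qed.
Lemma affine_shifts {R : realType} (g : R -> R) (a b A B : R) :
  continuous g -> a != 0 -> b != 0 -> ~ (exists r : rat, a / b = ratr r) ->
  (forall s, g (s + a) = g s + A) -> (forall s, g (s + b) = g s + B) ->
  forall s, g s = A / a * s + g 0.
Proof.
move=> gc a0 b0 irr ga gb.
pose h s := g s - A / a * s.
have hc : continuous h.
  move=> x; apply: continuousB; first exact: gc.
  apply: continuousM; [exact: cst_continuous | by move=> ?].
have ha s : h (s + a) = h s.
  rewrite /h ga mulrDr divfK //; ring.
have hb s : h (s + b) = h s + (B - A / a * b).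
  rewrite /h gb mulrDr; ring.
have d0 := shift_zero h a b _ hc a0 ha hb.
have hb' s : h (s + b) = h s by rewrite hb d0 addr0.
move=> s; have := periodic_const h a b hc b0 irr ha hb' s 0.
rewrite /h mulr0 subr0 => <-; ring.
Qed.
Definition II {R : realType} (f : R -> R) (x y : R) :=
  Rintegral (@lebesgue_measure R) `[x, y] f.

Lemma integ_reg {R : realType} (f : R -> R) (sg : R) :
  (sg = 1 \/ sg = -1) -> loc_integrable_punctured f ->
  forall x y, 0 < sg * x -> 0 < sg * y ->
  (@lebesgue_measure R).-integrable `[x, y] (EFin \o f).
Proof.
move=> hs hf x y hx hy; apply: hf; first exact: segment_compact.
move=> t /=; rewrite in_itv /= => /andP[xt ty] t0.
by case: hs hx hy => -> hx hy; move: xt ty t0 hx hy; lra.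
Qed.

Lemma II_split {R : realType} (f : R -> R) (x y z : R) : x <= y -> y <= z ->
  (@lebesgue_measure R).-integrable `[x, z] (EFin \o f) ->
  II f x z = II f x y + II f y z.
Proof.
move=> xy yz itf.
have := @Rintegral_itvB R f (BLeft x) (BRight z) y itf.
rewrite !bnd_simp => /(_ xy yz) H.
rewrite /II -[X in _ = _ + X]Rintegral_itv_obnd_cbnd; last first.
  by apply: integrableS itf => //; apply: subset_itvScc => //; lra.
by rewrite -H; ring.
Qed.
Lemma oint_chasles {R : realType} (f : R -> R) (sg : R) :
  (sg = 1 \/ sg = -1) -> loc_integrable_punctured f ->
  forall x y z, 0 < sg * x -> 0 < sg * y -> 0 < sg * z ->
  oint f x z = oint f x y + oint f y z.
Proof.
move=> hs hf x y z hx hy hz.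
have Hi := integ_reg f sg hs hf.
rewrite /oint -!/(II f _ _).
case: (leP x y) => xy; case: (leP y z) => yz; case: (leP x z) => xz.
- by rewrite (II_split f _ _ _ xy yz (Hi _ _ hx hz)).
- exfalso; move: xy yz xz; lra.
- rewrite (II_split f _ _ _ xz (ltW yz) (Hi _ _ hx hy)); ring.
- rewrite (II_split f _ _ _ (ltW xz) xy (Hi _ _ hz hy)); ring.
- rewrite (II_split f _ _ _ (ltW xy) xz (Hi _ _ hy hz)); ring.
- rewrite (II_split f _ _ _ yz (ltW xz) (Hi _ _ hy hx)); ring.
- exfalso; move: xy yz xz; lra.
- rewrite (II_split f _ _ _ (ltW yz) (ltW xy) (Hi _ _ hz hx)); ring.
Qed.
Lemma oint_cont {R : realType} (f : R -> R) (sg : R) :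
  (sg = 1 \/ sg = -1) -> loc_integrable_punctured f ->
  forall y0 y, 0 < sg * y0 -> 0 < sg * y -> {for y, continuous (oint f y0)}.
Proof.
move=> hs hf y0 y hy0 hy.
have Hi := integ_reg f sg hs hf.
set u := y - `|y| / 2; set w := y + `|y| / 2.
have yn : `|y| = y \/ `|y| = - y by case: (ler0P y) => _; [right|left].
have hu : 0 < sg * u by rewrite /u; case: hs hy => -> hy; case: yn => ->; lra.
have hw : 0 < sg * w by rewrite /w; case: hs hy => -> hy; case: yn => ->; lra.
have y0' : 0 < `|y|.
  by rewrite normr_gt0; apply/eqP => y0e; move: hy; rewrite y0e mulr0 ltxx.
have uw : u < w by rewrite /u /w; lra.
have K := parameterized_integral_continuous (ltW uw) (Hi u w hu hw).
have yin : y \in `]u, w[ by rewrite in_itv /= /u /w; apply/andP; split; lra.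
have Ky := within_continuous_continuous uw K yin.
pose H t := oint f y0 u + parameterized_integral lebesgue_measure u t f.
have Hc : {for y, continuous H}.
  apply: continuousD; [exact: cst_continuous | exact: Ky].
have E : \forall t \near y, oint f y0 t = H t.
  apply/nbhs_ballP; exists (`|y| / 2); first by rewrite /= divr_gt0.
  move=> t; rewrite /ball /= ltr_norml => /andP[t1 t2].
  have ht : 0 < sg * t by move: t1 t2; case: hs hy => -> hy; case: yn => ->; lra.
  rewrite /H (oint_chasles f sg hs hf y0 u t hy0 hu ht).
  congr (_ + _); rewrite /oint ifT //; move: t2; rewrite /u; lra.
have Ey : oint f y0 y = H y by apply: (nbhs_singleton E).
rewrite /prop_for /continuous_at Ey.
have E' : \forall t \near y, H t = oint f y0 t.
  by apply: filterS E => t ->.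
apply: cvg_trans (near_eq_cvg E') _.
exact: Hc.
Qed.
Lemma oint_refl {R : realType} (f : R -> R) x : oint f x x = 0.
Proof. by rewrite /oint lexx set_itv1 Rintegral_set1. Qed.

Lemma side_formula {R : realType} (f : R -> R) (sg p q Cp Cq : R) :
  (sg = 1 \/ sg = -1) -> loc_integrable_punctured f ->
  0 < p -> 0 < q -> p != 1 -> q != 1 ->
  ~ (exists r : rat, ln p / ln q = ratr r) ->
  (forall x : R, x != 0 -> oint f x (p * x) = Cp) ->
  (forall x : R, x != 0 -> oint f x (q * x) = Cq) ->
  forall u v, 0 < sg * u -> 0 < sg * v ->
  oint f u v = Cp / ln p * (ln (sg * v) - ln (sg * u)).
Proof.
move=> hs hf p0 q0 p1 q1 irr hp hq.
have ss : sg * sg = 1 by case: hs => ->; ring.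
have hsg : 0 < sg * sg by rewrite ss.
pose g s := oint f sg (sg * expR s).
have reg s : 0 < sg * (sg * expR s) by rewrite mulrA ss mul1r expR_gt0.
have gc : continuous g.
  move=> s; apply: (@continuous_comp _ _ _ (fun s => sg * expR s) (oint f sg)).
    apply: continuousM; [exact: cst_continuous | exact: continuous_expR].
  exact: (oint_cont f sg hs hf sg _ hsg (reg s)).
have nz s : sg * expR s != 0.
  by apply/eqP => e; move: (reg s); rewrite e mulr0 ltxx.
have shift (r C : R) : 0 < r -> (forall x : R, x != 0 -> oint f x (r * x) = C) ->
    forall s, g (s + ln r) = g s + C.
  move=> r0 hr s; rewrite /g expRD lnK ?posrE //.
  have e : sg * (expR s * r) = r * (sg * expR s) by ring.
  rewrite e (oint_chasles f sg hs hf sg (sg * expR s) _ hsg (reg s)); last first.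
    by rewrite -e mulrA ss mul1r mulr_gt0 // expR_gt0.
  by rewrite hr.
have lp0 : ln p != 0 by rewrite ln_eq0.
have lq0 : ln q != 0 by rewrite ln_eq0.
have gaff := affine_shifts g (ln p) (ln q) Cp Cq gc lp0 lq0 irr (shift p Cp p0 hp)
  (shift q Cq q0 hq).
have gx x : 0 < sg * x -> oint f sg x = Cp / ln p * ln (sg * x) + g 0.
  move=> hx; rewrite -gaff /g lnK ?posrE // mulrA ss mul1r //.
move=> u v hu hv.
rewrite (oint_chasles f sg hs hf u sg v hu hsg hv).
have := oint_chasles f sg hs hf u sg u hu hsg hu.
rewrite oint_refl (gx u hu) (gx v hv) => e.
have -> : oint f u sg = - (Cp / ln p * ln (sg * u) + g 0) by move: e; lra.
ring.
Qed.
Lemma deriv_lnK {R : realType} (sg lam c x : R) : (sg = 1 \/ sg = -1) -> 0 < sg * x ->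
  is_derive x 1 (fun y : R => lam * (ln (sg * y) - c)) (lam / x).
Proof.
move=> hs hx.
have x0 : x != 0 by apply/eqP => e; move: hx; rewrite e mulr0 ltxx.
have d1 : is_derive x 1 (fun y : R => sg * y) sg.
  have := @is_deriveZ R R^o R^o id sg x 1 1 (@is_derive_id _ _ x 1).
  move=> H; have e : sg%:A = sg by rewrite /GRing.scale /= mulr1.
  rewrite e in H; exact: H.
have d2 : is_derive x 1 ((@ln R) \o (fun y : R => sg * y)) ((sg * x)^-1 * sg).
  apply: is_derive1_comp => //; exact: is_derive1_ln.
have d3 := @is_deriveB R R^o R^o _ (cst c) x 1 _ _ d2 (is_derive_cst _ _ _).
have d4 := @is_deriveZ R R^o R^o _ lam x 1 _ d3.
have -> : lam / x = lam *: ((sg * x)^-1 * sg - 0).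
  by rewrite subr0; case: hs => ->; rewrite /GRing.scale /=; field.
exact: d4.
Qed.
Lemma side_ae {R : realType} (f : R -> R) (sg lam : R) :
  (sg = 1 \/ sg = -1) -> loc_integrable_punctured f ->
  (forall u v, 0 < sg * u -> 0 < sg * v ->
     oint f u v = lam * (ln (sg * v) - ln (sg * u))) ->
  forall u v, 0 < sg * u -> 0 < sg * v -> u < v ->
  {ae (@lebesgue_measure R), forall x, u < x < v -> f x = lam / x}.
Proof.
move=> hs hf hform u v hu hv uv.
have intf := integ_reg f sg hs hf u v hu hv.
pose psi := f \_ `[u, v].
have intpsi : (@lebesgue_measure R).-integrable `[u, v] (EFin \o psi).
  rewrite /psi -restrict_EFin; apply/integrable_restrict => //=.
  by rewrite setIid.
have locpsi := integrable_locally (measurable_itv `[u, v]) intf.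
have := lebesgue_differentiation locpsi.
apply: filterS; first exact: (ae_filter_ringOfSetsType lebesgue_measure).
move=> x lx /andP[ux xv].
have ax : (BLeft u < BRight x)%E.
  by rewrite /= lte_fin.
have [_ Fd] := FTC1_lebesgue_pt xv intpsi ax lx.
have xin : x \in `[u, v] by rewrite in_itv /= !ltW.
have psix : psi x = f x by rewrite /psi patchE mem_set.
rewrite -psix -Fd derive1E.
have hx : 0 < sg * x by case: hs hu hv => -> hu hv; move: ux xv hu hv; lra.
set F := (fun y => _).
have E : \forall y \near x, F y = lam * (ln (sg * y) - ln (sg * u)).
  apply/nbhs_ballP; exists (Num.min (x - u) (v - x)).
    by rewrite /= lt_min !subr_gt0 ux xv.
  have m1 : Num.min (x - u) (v - x) <= x - u by rewrite ge_min lexx.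
  have m2 : Num.min (x - u) (v - x) <= v - x by rewrite ge_min lexx orbT.
  move=> y; rewrite /ball /= ltr_norml => /andP[y1 y2].
  have y3 : u < y by move: m1 m2 y1 y2; lra.
  have y4 : y < v by move: m1 m2 y1 y2; lra.
  have hy : 0 < sg * y by case: hs hu hv => -> hu hv; move: ux xv hu hv y3 y4; lra.
  rewrite -hform // /oint ifT; last by move: y3; lra.
  rewrite /F /Rintegral; congr fine; apply: eq_integral => t.
  rewrite inE /= in_itv /= => /andP[t1 t2].
  rewrite /psi patchE mem_set //=; rewrite in_itv /=; apply/andP; split => //.
  by move: y4 t2; lra.
rewrite (near_eq_derive _ E).
have D := deriv_lnK sg lam (ln (sg * u)) x hs hx.
exact: (@derive.derive_val _ _ _ _ _ _ _ D).
Qed.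
Theorem mainTheorem4 (R : realType) (p q : R) (f : R -> R) :
  0 < p -> 0 < q -> p != 1 -> q != 1 ->
  ~ (exists r : rat, ln p / ln q = ratr r) ->
  loc_integrable_punctured f ->
  (exists Cp : R, forall x : R, x != 0 -> oint f x (p * x) = Cp) ->
  (exists Cq : R, forall x : R, x != 0 -> oint f x (q * x) = Cq) ->
  exists c : R, {ae (@lebesgue_measure R), forall t : R, t != 0 -> f t = c / t}.
Proof.
move=> p0 q0 p1 q1 irr hf [Cp hp] [Cq hq].
exists (Cp / ln p).
have hs1 : (1 : R) = 1 \/ (1 : R) = -1 by left.
have hs2 : (-1 : R) = 1 \/ (-1 : R) = -1 by right.
have F1 := side_formula f 1 p q Cp Cq hs1 hf p0 q0 p1 q1 irr hp hq.
have F2 := side_formula f (-1) p q Cp Cq hs2 hf p0 q0 p1 q1 irr hp hq.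
have A1 := side_ae f 1 (Cp / ln p) hs1 hf F1.
have A2 := side_ae f (-1) (Cp / ln p) hs2 hf F2.
pose e (n : nat) : R := (n.+1%:R)^-1.
pose M (n : nat) : R := n.+2%:R.
have e0 n : 0 < e n by rewrite /e invr_gt0.
have e1 n : e n <= 1 by rewrite /e invf_le1 // ler1n.
have M1 n : 1 < M n by rewrite /M ltr1n.
have H : forall n, {ae (@lebesgue_measure R), forall x,
    (e n < x < M n -> f x = Cp / ln p / x) /\
    (- M n < x < - e n -> f x = Cp / ln p / x)}.
  move=> n.
  have B1 := A1 (e n) (M n) ltac:(rewrite mul1r; exact: e0)
    ltac:(rewrite mul1r; move: (M1 n); lra) ltac:(move: (e1 n) (M1 n); lra).
  have B2 := A2 (- M n) (- e n) ltac:(rewrite mulN1r opprK; move: (M1 n); lra)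
    ltac:(rewrite mulN1r opprK; exact: e0) ltac:(move: (e1 n) (M1 n); lra).
  apply: (@filterS2 _ _ (ae_filter_ringOfSetsType lebesgue_measure) _ _ _ _ B1 B2).
  by move=> x h1 h2; split; [exact: h1|exact: h2].
have := ae_foralln H.
apply: filterS.
move=> t Ht t0.
have at0 : 0 < `|t| by rewrite normr_gt0.
have x0 : 0 <= `|t| + `|t|^-1 by apply: addr_ge0; [|rewrite invr_ge0]; exact: ltW.
have := archi_boundP x0; set n := Num.bound _ => hn.
have iv : 0 < `|t|^-1 by rewrite invr_gt0.
have c1 : `|t| < M n by rewrite /M -addn2 natrD; move: hn iv; lra.
have c2 : e n < `|t|.
  rewrite /e invf_plt ?posrE // -addn1 natrD; move: hn at0; lra.
have [tp|tn] := ltrP 0 t.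
- apply: (Ht n).1; move: c1 c2; rewrite gtr0_norm //; lra.
- apply: (Ht n).2; move: c1 c2; rewrite ler0_norm //; lra.
Qed.
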